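(* Let $\mathcal{X},\Theta$ be sets, and let $f_{\boldsymbol\theta}(\mathbf{x})=\operatorname{Tr}[\rho(\mathbf{x})O(\boldsymbol\theta)]$ be a conventional model on $n$ qubits, where each $\rho(\mathbf{x})$ is an $n$-qubit density matrix and each $O(\boldsymbol\theta)$ is an $n$-qubit Hermitian operator, and suppose $T\ge\sup_{\boldsymbol\theta\in\Theta}\|O(\boldsymbol\theta)\|_1$ with $T>0$. Then there exist $(n+1)$-qubit density matrices $\rho'(\boldsymbol\theta)$ ($\boldsymbol\theta\in\Theta$) and $(n+1)$-qubit Hermitian operators $O'(\mathbf{x})$ ($\mathbf{x}\in\mathcal{X}$) with $\sup_{\mathbf{x}}\|O'(\mathbf{x})\|_\infty\le T$ (with equality when some $\rho(\mathbf{x})$ is pure) such that $\operatorname{Tr}[\rho'(\boldsymbol\theta)O'(\mathbf{x})]=\operatorname{Tr}[\rho(\mathbf{x})O(\boldsymbol\theta)]$ for all $\mathbf{x}\in\mathcal{X}$, $\boldsymbol\theta\in\Theta$. Moreover $O'(\mathbf{x})$ can be taken to be $T\,(|0\rangle\langle0|-|1\rangle\langle1|)\otimes\rho(\mathbf{x})$.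
   Context: $\|A\|_1=\operatorname{Tr}\sqrt{A^2}$ is the trace norm and $\|A\|_\infty$ the spectral norm of a Hermitian operator $A$. *)

(* Defs.v *)
From mathcomp Require Import all_boot all_order all_algebra.
From mathcomp.real_closed Require Export mxtens.
Set Implicit Arguments. Unset Strict Implicit. Unset Printing Implicit Defensive.
Import Order.TTheory GRing.Theory Num.Theory.
Local Open Scope ring_scope.

Section Defs.
Variable C : numClosedFieldType.

Definition dagger m n (A : 'M[C]_(m, n)) : 'M[C]_(n, m) := (map_mx Num.conj A)^T.

Definition herm n (A : 'M[C]_n) : Prop := dagger A = A.

Definition psd n (A : 'M[C]_n) : Prop :=
  herm A /\ forall v : 'cV[C]_n, 0 <= (dagger v *m A *m v) 0 0.

Definition density n (rho : 'M[C]_n) : Prop := psd rho /\ \tr rho = 1.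

Definition pure n (rho : 'M[C]_n) : Prop :=
  exists psi : 'cV[C]_n, (dagger psi *m psi) 0 0 = 1 /\ rho = psi *m dagger psi.

Definition vnorm2 n (v : 'cV[C]_n) : C := \sum_i `|v i 0| ^+ 2.

(* ||A||_1 = Tr sqrt(A^2) <= t, where sqrt(A^2) is the (unique) PSD square root of A^2 *)
Definition tracenorm_le n (A : 'M[C]_n) (t : C) : Prop :=
  exists B : 'M[C]_n, psd B /\ B *m B = A *m A /\ \tr B <= t.

Definition opnorm_le n (A : 'M[C]_n) (t : C) : Prop :=
  forall v : 'cV[C]_n, vnorm2 (A *m v) <= t ^+ 2 * vnorm2 v.

Definition opnorm_attains n (A : 'M[C]_n) (t : C) : Prop :=
  exists v : 'cV[C]_n, v != 0 /\ vnorm2 (A *m v) = t ^+ 2 * vnorm2 v.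

Definition pauliZ : 'M[C]_2 := delta_mx 0 0 - delta_mx 1 1.

End Defs.

(* Main.v *)
Require Import Defs.
From mathcomp Require Import all_boot all_order all_algebra.
From mathcomp.real_closed Require Import mxtens.
From mathcomp Require Import sesquilinear spectral.
From mathcomp Require Import ring.
From Stdlib Require Import ClassicalEpsilon.
Set Implicit Arguments. Unset Strict Implicit. Unset Printing Implicit Defensive.
Import Order.TTheory GRing.Theory Num.Theory.
Local Open Scope ring_scope.

Section Aux.
Variable C : numClosedFieldType.

Lemma daggerE m n (A : 'M[C]_(m, n)) i j : dagger A i j = (A j i)^*.
Proof. by rewrite /dagger !mxE. Qed.

Lemma dagger_mul m n p (A : 'M[C]_(m, n)) (B : 'M[C]_(n, p)) :
  dagger (A *m B) = dagger B *m dagger A.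
Proof. by rewrite /dagger map_mxM trmx_mul. Qed.

Lemma daggerK m n (A : 'M[C]_(m, n)) : dagger (dagger A) = A.
Proof. by apply/matrixP => i j; rewrite !daggerE conjCK. Qed.

Lemma daggerD m n (A B : 'M[C]_(m, n)) : dagger (A + B) = dagger A + dagger B.
Proof. by apply/matrixP => i j; rewrite !daggerE !mxE rmorphD. Qed.

Lemma daggerN m n (A : 'M[C]_(m, n)) : dagger (- A) = - dagger A.
Proof. by apply/matrixP => i j; rewrite !daggerE !mxE rmorphN. Qed.

Lemma daggerZ m n a (A : 'M[C]_(m, n)) : dagger (a *: A) = a^* *: dagger A.
Proof. by apply/matrixP => i j; rewrite !daggerE !mxE rmorphM. Qed.

Lemma dagger_tens m n p q (A : 'M[C]_(m, n)) (B : 'M[C]_(p, q)) :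
  dagger (A *t B) = dagger A *t dagger B.
Proof. by rewrite /dagger map_mxT trmx_tens. Qed.

Lemma dagger_diag n (d : 'rV[C]_n) : dagger (diag_mx d) = diag_mx (map_mx Num.conj d).
Proof.
apply/matrixP => i j; rewrite daggerE !mxE.
by have [->|ne] := eqVneq j i; rewrite ?mulr1n ?mulr0n ?rmorph0.
Qed.

Lemma dagger1 n : dagger (1%:M : 'M[C]_n) = 1%:M.
Proof.
by apply/matrixP => i j; rewrite daggerE !mxE rmorph_nat eq_sym.
Qed.

Lemma dagger_delta m n (i : 'I_m) (j : 'I_n) : dagger (delta_mx i j : 'M[C]_(m, n)) = delta_mx j i.
Proof.
by apply/matrixP => k l; rewrite daggerE !mxE rmorph_nat andbC.
Qed.

Definition qf n (M : 'M[C]_n) (v : 'cV[C]_n) := (dagger v *m M *m v) 0 0.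

Lemma qfE n (M : 'M[C]_n) v :
  qf M v = \sum_i \sum_j (v i 0)^* * M i j * v j 0.
Proof.
rewrite /qf mxE exchange_big /=; apply: eq_bigr => j _; rewrite mxE mulr_suml.
by apply: eq_bigr => i _; rewrite daggerE.
Qed.

Lemma qfD n (M N : 'M[C]_n) v : qf (M + N) v = qf M v + qf N v.
Proof. by rewrite /qf mulmxDr mulmxDl mxE. Qed.

Lemma qfZ n a (M : 'M[C]_n) v : qf (a *: M) v = a * qf M v.
Proof. by rewrite /qf -scalemxAr -scalemxAl mxE. Qed.

Lemma qf_mul n (U M : 'M[C]_n) v : qf (dagger U *m M *m U) v = qf M (U *m v).
Proof. by rewrite /qf dagger_mul !mulmxA. Qed.

Lemma herm_psd_add n (M N : 'M[C]_n) : psd M -> psd N -> psd (M + N).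
Proof.
move=> [hM pM] [hN pN]; split; first by rewrite /herm daggerD hM hN.
by move=> v; have := qfD M N v; rewrite /qf => ->; rewrite addr_ge0.
Qed.

Lemma psdZ n a (M : 'M[C]_n) : 0 <= a -> psd M -> psd (a *: M).
Proof.
move=> a0 [hM pM]; split; first by rewrite /herm daggerZ hM geC0_conj.
by move=> v; have := qfZ a M v; rewrite /qf => ->; rewrite mulr_ge0.
Qed.

Lemma psd_congr n (U M : 'M[C]_n) : psd M -> psd (dagger U *m M *m U).
Proof.
move=> [hM pM]; split; first by rewrite /herm !dagger_mul daggerK hM mulmxA.
by move=> v; have := qf_mul U M v; rewrite /qf => ->; apply: pM.
Qed.


Lemma herm_spectral n (A : 'M[C]_n) : herm A -> exists (U : 'M[C]_n) (d : 'rV[C]_n),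
  [/\ U *m dagger U = 1%:M, dagger U *m U = 1%:M, forall i, d 0 i \is Num.real
    & A = dagger U *m diag_mx d *m U].
Proof.
move=> hA.
have hA' : A \is hermsymmx.
  apply/is_hermitianmxP; rewrite expr0 scale1r -map_trmx.
  by rewrite -[A in LHS]hA.
have Un := spectral_unitarymx A.
have dU : dagger (spectralmx A) = (spectralmx A)^t*%sesqui by rewrite /dagger map_trmx.
exists (spectralmx A), (spectral_diag A); split.
- by rewrite dU; apply/unitarymxP.
- by apply: mulmx1C; rewrite dU; apply/unitarymxP.
- by move=> i; have /mxOverP := hermitian_spectral_diag_real hA'; apply.
- have := orthomx_spectralP (hermitian_normalmx hA') => /= HH.
  by rewrite invmx_unitary // -dU in HH.
Qed.

Lemma qf_diag n (e : 'rV[C]_n) v :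
  qf (diag_mx e) v = \sum_i e 0 i * ((v i 0)^* * v i 0).
Proof.
rewrite qfE; apply: eq_bigr => i _.
rewrite (bigD1 i) //= big1 ?addr0 => [|j /negbTE ji]; last first.
  by rewrite !mxE eq_sym ji mulr0n mulr0 mul0r.
by rewrite !mxE eqxx mulr1n mulrCA mulrA.
Qed.

Lemma diag_psd n (e : 'rV[C]_n) : (forall i, 0 <= e 0 i) -> psd (diag_mx e).
Proof.
move=> e0; split.
  rewrite /herm dagger_diag; congr diag_mx; apply/matrixP => i j.
  by rewrite mxE [i]ord1 geC0_conj.
move=> v; rewrite -/(qf _ _) qf_diag; apply: sumr_ge0 => i _.
by apply: mulr_ge0 => //; rewrite mulrC mul_conjC_ge0.
Qed.

Lemma bform_delta n (M : 'M[C]_n) i j :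
  (dagger (delta_mx i 0 : 'cV_n) *m M *m (delta_mx j 0 : 'cV_n)) 0 0 = M i j.
Proof. by rewrite dagger_delta -(rowE i M) -colE !mxE. Qed.

Lemma qf_expand n (M : 'M[C]_n) u w c :
  qf M (u + c *: w) = qf M u + c * (dagger u *m M *m w) 0 0
    + c^* * (dagger w *m M *m u) 0 0 + c^* * c * qf M w.
Proof.
rewrite /qf daggerD daggerZ !mulmxDl !mulmxDr -!scalemxAl -!scalemxAr !mxE.
by rewrite !addrA mulrA.
Qed.

Lemma polar n (M : 'M[C]_n) : (forall v, qf M v = 0) -> M = 0.
Proof.
move=> h; apply/matrixP => i j; rewrite mxE.
have h1 := qf_expand M (delta_mx i 0) (delta_mx j 0) 1.
have h2 := qf_expand M (delta_mx i 0) (delta_mx j 0) 'i.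
rewrite !h !bform_delta rmorph1 in h1.
rewrite !h !bform_delta conjCi in h2.
have e1 : M j i = - M i j.
  have e : M i j + M j i = 0 by rewrite [RHS]h1; ring.
  apply/eqP; rewrite -subr_eq0; apply/eqP.
  by transitivity (M i j + M j i); [ring | exact e].
rewrite e1 in h2.
have : 'i * (M i j *+ 2) = 0 by rewrite [RHS]h2; ring.
move/eqP; rewrite mulf_eq0 (negbTE (@neq0Ci C)) /= mulrn_eq0 /= => /eqP //.
Qed.

Lemma dot_eq0 n (w : 'cV[C]_n) : (dagger w *m w) 0 0 = 0 -> w = 0.
Proof.
rewrite mxE => /eqP; rewrite psumr_eq0 => [/allP h|k _]; last first.
  by rewrite daggerE mulrC mul_conjC_ge0.
apply/matrixP => k l; rewrite [l]ord1 mxE.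
have /implyP := h k (mem_index_enum _) => /(_ isT).
by rewrite daggerE mulrC mul_conjC_eq0 => /eqP.
Qed.

Lemma herm_sq0 n (X : 'M[C]_n) : herm X -> X *m X = 0 -> X = 0.
Proof.
move=> hX XX; apply/matrixP => i j; rewrite mxE.
have : X *m (delta_mx j 0 : 'cV_n) = 0.
  apply: dot_eq0; rewrite dagger_mul hX -mulmxA [X *m (X *m _)]mulmxA XX.
  by rewrite mul0mx mulmx0 mxE.
by rewrite -colE => /matrixP /(_ i 0); rewrite !mxE.
Qed.


Lemma qfN n (M : 'M[C]_n) v : qf (- M) v = - qf M v.
Proof. by rewrite /qf mulmxN mulNmx mxE. Qed.

Lemma qfMn n (M : 'M[C]_n) v : qf (M *+ 2) v = qf M v *+ 2.
Proof. by rewrite !mulr2n qfD. Qed.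

Lemma qf_sandwich n (X M : 'M[C]_n) v : herm X -> qf (X *m M *m X) v = qf M (X *m v).
Proof. by move=> hX; rewrite -qf_mul hX. Qed.

Lemma diag_add_abs n (d : 'rV[C]_n) (s : bool) : (forall i, d 0 i \is Num.real) ->
  psd (diag_mx (\row_i `|d 0 i|) + (-1) ^+ s *: diag_mx d).
Proof.
move=> dr.
have -> : diag_mx (\row_i `|d 0 i|) + (-1) ^+ s *: diag_mx d =
          diag_mx (\row_i (`|d 0 i| + (-1) ^+ s * d 0 i)).
  by apply/matrixP => i j; rewrite !mxE; case: (i == j); rewrite ?mulr1n ?mulr0n ?mulr0 ?addr0.
apply: diag_psd => i; rewrite mxE; case: s; rewrite /= ?expr1 ?expr0 ?mul1r ?mulN1r.
- by rewrite subr_ge0 real_ler_norm.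
- by rewrite -[X in _ + X]opprK subr_ge0 -normrN real_ler_norm // rpredN.
Qed.

Lemma decomp n (O B : 'M[C]_n) : herm O -> psd B -> B *m B = O *m O ->
  psd (B + O) /\ psd (B - O).
Proof.
move=> hO [hB pB] BB.
have [U [d [UU UU' dr eO]]] := herm_spectral hO.
pose D := diag_mx d.
pose Q := diag_mx (\row_i `|d 0 i|).
pose B' := U *m B *m dagger U.
have K1 X : X *m U *m dagger U = X by rewrite -mulmxA UU mulmx1.
have K2 X : X *m dagger U *m U = X by rewrite -mulmxA UU' mulmx1.
have eB : B = dagger U *m B' *m U by rewrite /B' !mulmxA K2 UU' mul1mx.
have psdB' : psd B'.
  by have := psd_congr (dagger U) (conj hB pB); rewrite daggerK.
have hB' : herm B' by case: psdB'.
have psdQ : psd Q by apply: diag_psd => i; rewrite mxE normr_ge0.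
have hQ : herm Q by case: psdQ.
have QQ : Q *m Q = D *m D.
  rewrite /Q /D !mulmx_diag; congr diag_mx; apply/matrixP => i j.
  by rewrite [i]ord1 !mxE -!expr2 real_normK.
have BB' : B' *m B' = D *m D.
  by rewrite /B' !mulmxA K2 -[U *m B *m B]mulmxA BB eO /D !mulmxA !K1 UU mul1mx.
clearbody B'.
have cBQ : B' *m Q = Q *m B'.
  have c2 : B' *m (D *m D) = (D *m D) *m B' by rewrite -BB' mulmxA.
  rewrite /D mulmx_diag in c2.
  apply/matrixP => i j; rewrite /Q mul_mx_diag mul_diag_mx !mxE.
  move/matrixP: c2 => /(_ i j).
  rewrite mul_mx_diag mul_diag_mx !mxE => c2.
  set a := `|d 0 i|; set b := `|d 0 j|.
  have da : d 0 i * d 0 i = a ^+ 2 by rewrite real_normK // expr2.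
  have db : d 0 j * d 0 j = b ^+ 2 by rewrite real_normK // expr2.
  rewrite da db in c2.
  have h : B' i j * (b - a) * (b + a) = 0.
    by transitivity (B' i j * b ^+ 2 - a ^+ 2 * B' i j); [ring | rewrite c2 subrr].
  move/eqP: h; rewrite !mulf_eq0 => /orP [/orP [/eqP Hb | ]|]; first by rewrite Hb mul0r mulr0.
    by rewrite subr_eq0 => /eqP ->; rewrite mulrC.
  rewrite paddr_eq0 ?normr_ge0 // => /andP [/eqP -> /eqP ->].
  by rewrite mulr0 mul0r.
pose X := B' - Q.
have hX : herm X by rewrite /herm /X daggerD daggerN hB' hQ.
have XQ : X *m Q = - (X *m B').
  have XS : X *m (B' + Q) = 0.
    rewrite /X mulmxBl !mulmxDr BB' -QQ cBQ.
    by rewrite [X in _ - X]addrC subrr.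
  rewrite mulmxDr in XS.
  by apply/eqP; rewrite -addr_eq0 addrC XS.
have XX1 : X *m X = (X *m B') *+ 2.
  by rewrite -[X *m X]/(X *m (B' - Q)) mulmxBr XQ opprK mulr2n.
have XX2 : X *m X = (- (X *m Q)) *+ 2.
  by rewrite XX1 XQ opprK.
have X3 : X *m X *m X = 0.
  apply: polar => v; apply/le_anti/andP; split.
  - rewrite XX2 mulr2n mulmxDl -mulr2n mulNmx qfMn qfN qf_sandwich //.
    rewrite mulr2n -opprD oppr_le0.
    by apply: addr_ge0; case: psdQ => _; apply.
  - rewrite XX1 mulr2n mulmxDl -mulr2n qfMn qf_sandwich //.
    by rewrite mulrn_wge0 //; case: psdB' => _; apply.
have hXX : herm (X *m X) by rewrite /herm dagger_mul hX.
have XX0 : X *m X = 0.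
  by apply: herm_sq0 => //; rewrite mulmxA X3 mul0mx.
have X0 : X = 0 by apply: herm_sq0.
have eB'Q : B' = Q by apply/eqP; rewrite -subr_eq0 -/X X0.
rewrite eB eO eB'Q -mulmxDl -mulmxDr -mulmxBl -mulmxBr.
split; apply: psd_congr.
- by have := diag_add_abs false dr; rewrite expr0 scale1r.
- by have := diag_add_abs true dr; rewrite expr1 scaleN1r.
Qed.


Lemma vnorm2E n (w : 'cV[C]_n) : vnorm2 w = qf 1%:M w.
Proof.
rewrite /qf mulmx1 mxE /vnorm2; apply: eq_bigr => i _.
by rewrite normCK daggerE mulrC.
Qed.

Lemma qf_herm_sq n (M : 'M[C]_n) v : herm M -> vnorm2 (M *m v) = qf (M *m M) v.
Proof. by move=> hM; rewrite vnorm2E /qf dagger_mul hM mulmx1 !mulmxA. Qed.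

Lemma density_contract n (rho : 'M[C]_n) : density rho ->
  forall v, vnorm2 (rho *m v) <= vnorm2 v.
Proof.
move=> [[hr pr] tr1] v.
have [U [e [UU UU' er er']]] := herm_spectral hr.
have psdE : psd (diag_mx e).
  have := psd_congr (dagger U) (conj hr pr); rewrite daggerK er' !mulmxA UU mul1mx.
  by rewrite -mulmxA UU mulmx1.
have e0 i : 0 <= e 0 i.
  by case: psdE => _ /(_ (delta_mx i 0)); rewrite /qf bform_delta mxE eqxx mulr1n.
have esum : \sum_i e 0 i = 1.
  by rewrite -mxtrace_diag -tr1 er' mxtrace_mulC mulmxA UU mul1mx.
have e1 i : e 0 i <= 1.
  by rewrite -esum (bigD1 i) //= lerDl sumr_ge0.
rewrite qf_herm_sq // vnorm2E -subr_ge0.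
have -> : rho *m rho = dagger U *m (diag_mx e *m diag_mx e) *m U.
  by rewrite er' !mulmxA -[dagger U *m diag_mx e *m U *m dagger U]mulmxA UU mulmx1.
have -> : (1%:M : 'M[C]_n) = dagger U *m 1%:M *m U by rewrite mulmx1.
rewrite !qf_mul -qfN -qfD mulmx_diag.
have -> : 1%:M - diag_mx (\row_j (e 0 j * e 0 j)) = diag_mx (\row_j (1 - e 0 j * e 0 j)).
  apply/matrixP => i j; rewrite !mxE; case: (i == j); rewrite ?mulr1n ?mulr0n //.
  by rewrite subr0.
case: (diag_psd (e := \row_j (1 - e 0 j * e 0 j))) => // [i|_ ]; last by apply.
by rewrite mxE subr_ge0 mulr_ile1.
Qed.


Lemma sum_tens m n (F : 'I_(m * n) -> C) :
  \sum_k F k = \sum_(a < m) \sum_(i < n) F (mxtens_index (a, i)).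
Proof.
rewrite (reindex (@mxtens_index m n)) /=; last first.
  by exists (@mxtens_unindex m n) => k _; rewrite (mxtens_indexK, mxtens_unindexK).
by rewrite pair_big; apply: eq_bigr => -[a i].
Qed.

Lemma trace_tens m n (A : 'M[C]_m) (B : 'M[C]_n) : \tr (A *t B) = \tr A * \tr B.
Proof. by rewrite /mxtrace mulr_sum; apply: eq_bigr => k _; rewrite mxE. Qed.

Lemma trace_delta n (a : 'I_n) : \tr (delta_mx a a : 'M[C]_n) = 1.
Proof.
rewrite /mxtrace (bigD1 a) //= big1 ?addr0 => [|k /negbTE ka].
  by rewrite mxE eqxx.
by rewrite mxE ka.
Qed.

Lemma psd_tens_delta n (a : 'I_2) (M : 'M[C]_n) : psd M -> psd (delta_mx a a *t M).
Proof.
move=> [hM pM]; split; first by rewrite /herm dagger_tens dagger_delta hM.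
move=> v; rewrite -/(qf _ _).
pose w : 'cV_n := \col_i v (mxtens_index (a, i)) 0.
suff -> : qf (delta_mx a a *t M) v = qf M w by apply: pM.
rewrite !qfE sum_tens.
under eq_bigr => b _ do under eq_bigr => i _ do rewrite sum_tens.
rewrite (bigD1 a) //= [X in _ + X]big1 ?addr0 => [|b /negbTE ba]; last first.
  apply: big1 => i _; apply: big1 => c _; apply: big1 => j _.
  by rewrite tensmxE mxE ba /= mul0r mulr0 mul0r.
apply: eq_bigr => i _.
rewrite (bigD1 a) //= [X in _ + X]big1 ?addr0 => [|c /negbTE ca]; last first.
  by apply: big1 => j _; rewrite tensmxE mxE ca andbF mul0r mulr0 mul0r.
by apply: eq_bigr => j _; rewrite tensmxE !mxE eqxx mul1r.
Qed.

Lemma ord2_10 : ((1 : 'I_2) == 0) = false. Proof. by []. Qed.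
Lemma ord2_01 : ((0 : 'I_2) == 1) = false. Proof. by []. Qed.

Lemma ord2_cases (a : 'I_2) : a = 0 \/ a = 1.
Proof. by case: a => [[|[|k]]] Hk //; [left|right]; apply: val_inj. Qed.

Lemma pauliZ_off (a b : 'I_2) : a != b -> pauliZ C a b = 0.
Proof.
by case: (ord2_cases a) => ->; case: (ord2_cases b) => -> //= _;
  rewrite !mxE ?ord2_10 ?ord2_01 ?eqxx /= subrr.
Qed.

Lemma pauliZ_diag (a : 'I_2) : `|pauliZ C a a| = 1.
Proof.
by case: (ord2_cases a) => ->;
  rewrite !mxE ?ord2_10 ?ord2_01 ?eqxx /= ?subr0 ?sub0r ?normrN normr1.
Qed.

Lemma vnorm2Z n (c : C) (w : 'cV[C]_n) : vnorm2 (c *: w) = `|c| ^+ 2 * vnorm2 w.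
Proof.
rewrite /vnorm2 mulr_sumr; apply: eq_bigr => i _.
by rewrite mxE normrM exprMn.
Qed.

Lemma vnorm2_tens n (v : 'cV[C]_(2 * n)) :
  vnorm2 v = \sum_(a < 2) vnorm2 (\col_i v (mxtens_index (a, i)) 0).
Proof.
rewrite /vnorm2 sum_tens; apply: eq_bigr => a _; apply: eq_bigr => i _.
by rewrite mxE.
Qed.

Lemma Ztens_apply n (rho : 'M[C]_n) (v : 'cV[C]_(2 * n)) (a : 'I_2) i :
  ((pauliZ C *t rho) *m v) (mxtens_index (a, i)) 0 =
  pauliZ C a a * (rho *m \col_j v (mxtens_index (a, j)) 0) i 0.
Proof.
rewrite mxE sum_tens (bigD1 a) //= [X in _ + X]big1 ?addr0 => [|b ba]; last first.
  by apply: big1 => j _; rewrite tensmxE pauliZ_off 1?eq_sym // !mul0r.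
rewrite [(rho *m _) i 0]mxE mulr_sumr; apply: eq_bigr => j _.
by rewrite tensmxE [(\col_j _) j 0]mxE mulrA.
Qed.

Lemma opnorm_Z n (rho : 'M[C]_n) (T : C) : density rho -> 0 < T ->
  opnorm_le (T *: (pauliZ C *t rho)) T.
Proof.
move=> dr T0 v; rewrite -scalemxAl vnorm2Z gtr0_norm //.
apply: ler_wpM2l; first by rewrite exprn_ge0 ?ltW.
rewrite vnorm2_tens [X in _ <= X]vnorm2_tens.
apply: ler_sum => a _.
have -> : \col_i ((pauliZ C *t rho) *m v) (mxtens_index (a, i)) 0 =
          pauliZ C a a *: (rho *m \col_j v (mxtens_index (a, j)) 0).
  by apply/matrixP => i k; rewrite [k]ord1 [LHS]mxE Ztens_apply [RHS]mxE.
by rewrite vnorm2Z pauliZ_diag expr1n mul1r density_contract.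
Qed.

End Aux.

Lemma mxtraceN (C : numClosedFieldType) n (A : 'M[C]_n) : \tr (- A) = - \tr A.
Proof. by rewrite /mxtrace -sumrN; apply: eq_bigr => i _; rewrite mxE. Qed.

Lemma tensN (C : numClosedFieldType) m n p q (A : 'M[C]_(m, n)) (B : 'M[C]_(p, q)) :
  (- A) *t B = - (A *t B).
Proof. by apply/matrixP => i j; rewrite !mxE mulNr. Qed.

Theorem mainTheorem4 (C : numClosedFieldType) (X Theta : Type) (n : nat)
    (rho : X -> 'M[C]_(2 ^ n)) (O : Theta -> 'M[C]_(2 ^ n)) (T : C) :
  (forall x, density (rho x)) ->
  (forall th, herm (O th)) ->
  0 < T ->
  (forall th, tracenorm_le (O th) T) ->
  let O' := fun x : X => T *: (pauliZ C *t rho x) in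
  exists rho' : Theta -> 'M[C]_(2 * 2 ^ n),
    (forall th, density (rho' th)) /\
    (forall x, herm (O' x)) /\
    (forall x, opnorm_le (O' x) T) /\
    (forall x, pure (rho x) -> opnorm_attains (O' x) T) /\
    (forall x th, \tr (rho' th *m O' x) = \tr (rho x *m O th)).
Proof.
move=> dens hermO T0 tnO O'.
have Tn0 : T != 0 by rewrite gt_eqF.
have two0 : (2%:R : C) != 0 by rewrite pnatr_eq0.
pose N := (2 ^ n)%:R : C.
have N0 : N != 0 by rewrite pnatr_eq0 expn_eq0.
have hB : forall th, {B : 'M[C]_(2 ^ n) | psd B /\ B *m B = O th *m O th /\ \tr B <= T}.
  by move=> th; apply: constructive_indefinite_description; exact: tnO th.
pose B th := sval (hB th).
pose s th := (T - \tr (B th)) / (2%:R * N).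
pose P th := 2^-1 *: (B th + O th) + s th *: (1%:M : 'M[C]_(2 ^ n)).
pose Nm th := 2^-1 *: (B th - O th) + s th *: (1%:M : 'M[C]_(2 ^ n)).
have PN th : P th - Nm th = O th.
  apply/matrixP => i j; rewrite /P /Nm !mxE; field; done.
have hZ : dagger (pauliZ C) = pauliZ C by rewrite /pauliZ daggerD daggerN !dagger_delta.
exists (fun th => T^-1 *: (delta_mx 0 0 *t P th + delta_mx 1 1 *t Nm th)).
split; [|split; [|split; [|split]]].
- move=> th; case: (svalP (hB th)) => psdB [BB trB].
  have [psdP psdN] := decomp (hermO th) psdB BB.
  have s0 : 0 <= s th.
    by rewrite /s divr_ge0 ?subr_ge0 // mulr_ge0 ?ler0n.
  have psd1 : psd (1%:M : 'M[C]_(2 ^ n)).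
    by rewrite -diag_const_mx; apply: diag_psd => i; rewrite mxE ler01.
  have h2 : 0 <= (2^-1 : C) by rewrite invr_ge0 ler0n.
  split.
    apply: psdZ; first by rewrite invr_ge0 ltW.
    apply: herm_psd_add; apply: psd_tens_delta; apply: herm_psd_add;
      by apply: psdZ.
  rewrite mxtraceZ mxtraceD !trace_tens !trace_delta !mul1r /P /Nm.
  rewrite !mxtraceD !mxtraceZ !mxtraceD mxtraceN mxtrace1 -/N /s -/(B th).
  by field; rewrite -/N N0 Tn0.
- move=> x; rewrite /herm /O' daggerZ dagger_tens hZ.
  by case: (dens x) => [[-> _] _]; rewrite geC0_conj // ltW.
- by move=> x; apply: opnorm_Z.
- move=> x [psi [npsi er]]; rewrite /O' er.
  pose v : 'cV[C]_(2 * 2 ^ n) := (delta_mx 0 0 : 'cV[C]_2) *t psi.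
  have pp : dagger psi *m psi = 1%:M.
    by apply/matrixP => i j; rewrite !ord1 npsi mxE.
  have Ov : T *: (pauliZ C *t (psi *m dagger psi)) *m v = T *: v.
    rewrite -scalemxAl; congr (_ *: _); rewrite /v.
    have TM := tensmx_mul (pauliZ C) (psi *m dagger psi) (delta_mx 0 0 : 'cV[C]_2) psi.
    rewrite -mulmxA pp mulmx1 in TM.
    have Ze : pauliZ C *m (delta_mx 0 0 : 'cV[C]_2) = delta_mx 0 0.
      by rewrite /pauliZ mulmxBl mul_delta_mx mul_delta_mx_0 // subr0.
    rewrite Ze in TM; exact: TM.
  exists v; split; last by rewrite Ov vnorm2Z gtr0_norm.
  apply/eqP => v0.
  have psi0 : psi = 0.
    apply/matrixP => i j; rewrite [j]ord1.
    move/matrixP: v0 => /(_ (mxtens_index ((0 : 'I_2), i)) 0).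
    rewrite /v mxE mxtens_indexK /= !mxE.
    by rewrite !(ord1 (Ordinal _)) eqxx mul1r.
  by move: npsi; rewrite psi0 mulmx0 mxE => /eqP; rewrite eq_sym oner_eq0.
- move=> x th; rewrite /O' -scalemxAr -scalemxAl scalerA mulfV // scale1r.
  rewrite mulmxDl !tensmx_mul.
  have -> : (delta_mx 0 0 : 'M[C]_2) *m pauliZ C = delta_mx 0 0.
    by rewrite /pauliZ mulmxBr mul_delta_mx mul_delta_mx_0 // subr0.
  have -> : (delta_mx 1 1 : 'M[C]_2) *m pauliZ C = - delta_mx 1 1.
    by rewrite /pauliZ mulmxBr mul_delta_mx mul_delta_mx_0 // sub0r.
  rewrite tensN mxtraceD mxtraceN !trace_tens !trace_delta !mul1r.
  by rewrite -mxtraceN -mxtraceD -mulmxBl PN mxtrace_mulC.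
Qed.
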